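(* Let $\mathbf{A}$ be a POVM on $\mathbb{C}^2$. Then $\mathbf{A}$ is projective-simulable if and only if the pair of measurements $\{\mathbf{A},\bar{\mathbf{A}}\}$ cannot demonstrate EPR steering on any bipartite quantum state in which the measured party has local dimension 2.
   Context: A POVM on $\mathbb{C}^d$ with $n$ outcomes is a tuple $\mathbf{A}=(A_1,\ldots,A_n)$ of positive semidefinite operators with $\sum_a A_a=\mathbb{I}$; it is projective if all effects are projectors. A POVM $\mathbf{A}$ is projective-simulable if there are a probability distribution $p(j)$ over finitely many projective POVMs $\mathbf{B}^{(j)}$ on $\mathbb{C}^d$ and conditional distributions $q(i|j,i')$ such that $A_i=\sum_j p(j)\sum_{i'}q(i|j,i')B^{(j)}_{i'}$ for all $i$. For a qubit POVM, $\bar{\mathbf{A}}=(\bar A_i)$ with $\bar A_i=\mathrm{Tr}(A_i)\mathbb{I}-A_i$. A set of measurements $\{\mathbf{A}^{(x)}\}_x$ on $\mathbb{C}^2$ applied by one party to a state $\rho$ on $\mathbb{C}^2\otimes\mathbb{C}^{d'}$ produces the assemblage $\sigma_{a|x}=\mathrm{Tr}_1[(A^{(x)}_a\otimes\mathbb{I})\rho]$; it demonstrates steering if there is no local hidden state model, i.e. no probability distribution $\pi(\lambda)$, states $\sigma_\lambda$ on $\mathbb{C}^{d'}$ and conditional distributions $p(a|x,\lambda)$ with $\sigma_{a|x}=\sum_\lambda\pi(\lambda)p(a|x,\lambda)\sigma_\lambda$ for all $a,x$. *)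

(* Defs.v *)
(* complex numbers are modelled by algC (algebraic complex numbers). *)
From HB Require Import structures.
From mathcomp Require Import all_boot all_order all_algebra all_field.
Set Implicit Arguments. Unset Strict Implicit. Unset Printing Implicit Defensive.
Import Order.TTheory GRing.Theory Num.Theory.
Local Open Scope ring_scope.

Definition adj_mx m n (M : 'M[algC]_(m, n)) : 'M[algC]_(n, m) := (map_mx Num.conj M)^T.

Definition psd n (M : 'M[algC]_n) : Prop :=
  forall v : 'cV[algC]_n, 0 <= (adj_mx v *m M *m v) 0 0.

Definition povm d k (A : 'I_k -> 'M[algC]_d) : Prop :=
  (forall a, psd (A a)) /\ \sum_(a < k) A a = 1%:M.

Definition projective_povm d k (A : 'I_k -> 'M[algC]_d) : Prop :=
  povm A /\ forall a, A a *m A a = A a.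

Definition prob_dist (I : finType) (p : I -> algC) : Prop :=
  (forall i, 0 <= p i) /\ \sum_i p i = 1.

Definition projective_simulable d n (A : 'I_n -> 'M[algC]_d) : Prop :=
  exists (K : nat) (p : 'I_K -> algC) (m : 'I_K -> nat)
         (B : forall j : 'I_K, 'I_(m j) -> 'M[algC]_d)
         (q : forall j : 'I_K, 'I_(m j) -> 'I_n -> algC),
    prob_dist p /\
    (forall j, projective_povm (B j)) /\
    (forall j i', prob_dist (q j i')) /\
    (forall i, A i = \sum_(j < K) p j *: \sum_(i' < m j) q j i' i *: B j i').

Definition bar_povm n (A : 'I_n -> 'M[algC]_2) : 'I_n -> 'M[algC]_2 :=
  fun i => \tr (A i) *: 1%:M - A i.

Definition state n (rho : 'M[algC]_n) : Prop := psd rho /\ \tr rho = 1.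

(* X (x) I on C^2 (x) C^d, with the basis |i> (x) |k> indexed by mxvec_index i k *)
Definition tens_id d (X : 'M[algC]_2) : 'M[algC]_(2 * d) :=
  \sum_(i < 2) \sum_(j < 2) \sum_(k < d)
     X i j *: delta_mx (mxvec_index i k) (mxvec_index j k).

Definition ptrace1 d (Y : 'M[algC]_(2 * d)) : 'M[algC]_d :=
  \matrix_(k < d, l < d) \sum_(i < 2) Y (mxvec_index i k) (mxvec_index i l).

Definition assemblage d (X : Type) n (Meas : X -> 'I_n -> 'M[algC]_2)
  (rho : 'M[algC]_(2 * d)) (x : X) (a : 'I_n) : 'M[algC]_d :=
  ptrace1 (tens_id d (Meas x a) *m rho).

Definition has_LHS d (X : Type) n (sigma : X -> 'I_n -> 'M[algC]_d) : Prop :=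
  exists (L : nat) (pi : 'I_L -> algC) (sl : 'I_L -> 'M[algC]_d)
         (pcond : X -> 'I_L -> 'I_n -> algC),
    prob_dist pi /\
    (forall l, state (sl l)) /\
    (forall x l, prob_dist (pcond x l)) /\
    (forall x a, sigma x a = \sum_(l < L) (pi l * pcond x l a) *: sl l).

Definition demonstrates_steering d (X : Type) n (Meas : X -> 'I_n -> 'M[algC]_2)
  (rho : 'M[algC]_(2 * d)) : Prop :=
  ~ has_LHS (assemblage Meas rho).

Definition pair_A_barA n (A : 'I_n -> 'M[algC]_2) : bool -> 'I_n -> 'M[algC]_2 :=
  fun x => if x then bar_povm A else A.

(* Main.v *)
Require Import Defs.
From HB Require Import structures.
From mathcomp Require Import all_boot all_order all_algebra all_field ring lra.
From Stdlib Require Import Classical_Prop.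
Set Implicit Arguments. Unset Strict Implicit. Unset Printing Implicit Defensive.
Import Order.TTheory GRing.Theory Num.Theory.
Local Open Scope ring_scope.

Lemma adj_mxE m n (M : 'M[algC]_(m, n)) i j : adj_mx M i j = (M j i)^*.
Proof. by rewrite /adj_mx !mxE. Qed.

Lemma adj_mxK m n (M : 'M[algC]_(m, n)) : adj_mx (adj_mx M) = M.
Proof. by apply/matrixP=> i j; rewrite !adj_mxE conjCK. Qed.

Lemma adj_mxM m n p (A : 'M[algC]_(m, n)) (B : 'M[algC]_(n, p)) :
  adj_mx (A *m B) = adj_mx B *m adj_mx A.
Proof. by rewrite /adj_mx map_mxM trmx_mul. Qed.

Lemma adj_mxD m n (A B : 'M[algC]_(m, n)) : adj_mx (A + B) = adj_mx A + adj_mx B.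
Proof. by apply/matrixP=> i j; rewrite !(adj_mxE, mxE) rmorphD. Qed.

Lemma qfE n (M : 'M[algC]_n) (v : 'cV_n) :
  (adj_mx v *m M *m v) 0 0 = \sum_i \sum_j (v i 0)^* * M i j * v j 0.
Proof.
rewrite mxE [RHS]exchange_big /=.
apply: eq_bigr => j _; rewrite mxE big_distrl /=.
by apply: eq_bigr => i _; rewrite adj_mxE.
Qed.

Lemma psd_add n (M N : 'M[algC]_n) : psd M -> psd N -> psd (M + N).
Proof. by move=> hM hN v; rewrite mulmxDr mulmxDl mxE addr_ge0. Qed.

Lemma psd_scale n (c : algC) (M : 'M[algC]_n) : 0 <= c -> psd M -> psd (c *: M).
Proof. by move=> hc hM v; rewrite -scalemxAr -scalemxAl mxE mulr_ge0. Qed.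

Lemma psd0 n : psd (0 : 'M[algC]_n).
Proof. by move=> v; rewrite mulmx0 mul0mx mxE. Qed.

Lemma psd_sum (I : finType) (P : pred I) n (F : I -> 'M[algC]_n) :
  (forall i, P i -> psd (F i)) -> psd (\sum_(i | P i) F i).
Proof.
move=> h; apply: (big_ind (fun M => psd M)) => //; first exact: psd0.
exact: psd_add.
Qed.

Lemma psd1 n : psd (1%:M : 'M[algC]_n).
Proof.
move=> v; rewrite mulmx1 mxE; apply: sumr_ge0 => i _.
by rewrite adj_mxE mulrC -normCK exprn_ge0.
Qed.

Lemma psd_conj m n (W : 'M[algC]_(m, n)) (R : 'M[algC]_m) :
  psd R -> psd (adj_mx W *m R *m W).
Proof.
move=> hR v; have := hR (W *m v).
by rewrite adj_mxM !mulmxA.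
Qed.

Lemma psd_uu n (u : 'cV[algC]_n) : psd (u *m adj_mx u).
Proof.
have := @psd_conj 1 n (adj_mx u) 1%:M (@psd1 1).
by rewrite adj_mxK mulmx1.
Qed.

Lemma qf_delta n (M : 'M[algC]_n) (i : 'I_n) :
  (adj_mx (delta_mx i 0 : 'cV_n) *m M *m (delta_mx i 0 : 'cV_n)) 0 0 = M i i.
Proof.
rewrite qfE (bigD1 i) //= [X in _ + X]big1 => [|j ji]; last first.
  by rewrite big1 // => k _; rewrite !mxE (negbTE ji) conjC0 !mul0r.
rewrite addr0 (bigD1 i) //= [X in _ + X]big1 => [|j ji]; last by rewrite !mxE (negbTE ji) mulr0.
by rewrite !mxE !eqxx conjC1 mul1r mulr1 addr0.
Qed.

Lemma psd_diag n (M : 'M[algC]_n) i : psd M -> 0 <= M i i.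
Proof. by move=> hM; rewrite -qf_delta. Qed.

Lemma psd_tr_ge0 n (M : 'M[algC]_n) : psd M -> 0 <= \tr M.
Proof. by move=> hM; apply: sumr_ge0 => i _; apply: psd_diag. Qed.

Lemma adj_mxZ m n c (A : 'M[algC]_(m, n)) : adj_mx (c *: A) = c^* *: adj_mx A.
Proof. by apply/matrixP=> i j; rewrite !(adj_mxE, mxE) rmorphM. Qed.

Lemma adj_delta n (a : 'I_n) : adj_mx (delta_mx a 0 : 'cV_n) = delta_mx 0 a.
Proof.
apply/matrixP=> i j; rewrite adj_mxE !mxE [i]ord1 eqxx andbT andTb.
by case: (j == a); rewrite ?conjC1 ?conjC0.
Qed.

Lemma bil_delta n (M : 'M[algC]_n) (a b : 'I_n) :
  (adj_mx (delta_mx a 0 : 'cV_n) *m M *m (delta_mx b 0 : 'cV_n)) 0 0 = M a b.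
Proof. by rewrite adj_delta -rowE -colE !mxE. Qed.

Lemma bil_delta_mx n (M : 'M[algC]_n) (a b : 'I_n) :
  adj_mx (delta_mx a 0 : 'cV_n) *m M *m (delta_mx b 0 : 'cV_n) = (M a b)%:M.
Proof. by apply/matrixP=> i j; rewrite [i]ord1 [j]ord1 bil_delta mxE eqxx mulr1n. Qed.

Lemma qf2 n (M : 'M[algC]_n) (a b : 'I_n) (x y : algC) :
  let v := x *: (delta_mx a 0 : 'cV_n) + y *: delta_mx b 0 in
  (adj_mx v *m M *m v) 0 0 =
  x^* * x * M a a + x^* * y * M a b + y^* * x * M b a + y^* * y * M b b.
Proof.
rewrite /= adj_mxD !adj_mxZ !mulmxDl !mulmxDr.
rewrite -!scalemxAl -!scalemxAr !bil_delta_mx !mxE /= mulr1n.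
by rewrite !mulrA; ring.
Qed.

Lemma ge0_conj (x : algC) : 0 <= x -> x^* = x.
Proof. by move=> h; apply: conj_Creal; apply: ger0_real. Qed.

Lemma psd_herm n (M : 'M[algC]_n) i j : psd M -> M j i = (M i j)^*.
Proof.
move=> hM; have [->|ij] := eqVneq i j; first by rewrite ge0_conj // psd_diag.
have dii := ge0_conj (psd_diag i hM); have djj := ge0_conj (psd_diag j hM).
have h1 := hM (1 *: (delta_mx i 0 : 'cV_n) + 1 *: delta_mx j 0).
have h2 := hM (1 *: (delta_mx i 0 : 'cV_n) + 'i *: delta_mx j 0).
rewrite qf2 in h1; rewrite qf2 in h2.
move: h1 h2; rewrite conjC1 !mul1r !mulr1 conjCi => h1 h2.
have e1 := ge0_conj h1; have e2 := ge0_conj h2.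
rewrite !rmorphD /= !rmorphM /= !rmorphN /= conjCi dii djj in e1 e2.
set a := M i j in e1 e2 *; set b := M j i in e1 e2 *.
have E1 : a + b - (a^* + b^*) = 0.
  transitivity ((M i i + a + b + M j j) - (M i i + a^* + b^* + M j j)); first by ring.
  by rewrite e1 subrr.
have E2 : 'i * (a - b) + 'i * (a^* - b^*) = 0.
  transitivity ((M i i + 'i * a + - 'i * b + - 'i * 'i * M j j) -
    (M i i + - 'i * a^* + - - 'i * b^* + - - 'i * - 'i * M j j)); first by ring.
  by rewrite e2 subrr.
have : (b - a^*) * 2 = 0.
  transitivity ((a + b - (a^* + b^*)) + 'i * ('i * (a - b) + 'i * (a^* - b^*))
     - ('i ^+ 2 + 1) * ((a - b) + (a^* - b^*))); first by ring.
  by rewrite E1 E2 sqrCi addNr !mul0r mulr0 !addr0 subr0.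
by move/eqP; rewrite mulf_eq0 pnatr_eq0 orbF subr_eq0 => /eqP.
Qed.

Lemma psd_tr0 n (M : 'M[algC]_n) : psd M -> \tr M = 0 -> M = 0.
Proof.
move=> hM htr.
have d0 : forall i, M i i = 0.
  move=> i; move/eqP: htr; rewrite /mxtrace psumr_eq0 => [/allP h|k _]; last exact: psd_diag.
  by apply/eqP; apply: h; rewrite mem_index_enum.
apply/matrixP=> i j; rewrite mxE.
have [<-|ij] := eqVneq i j; first exact: d0.
have h := hM ((- M i j) *: (delta_mx i 0 : 'cV_n) + 1 *: delta_mx j 0).
rewrite qf2 !d0 (psd_herm i j hM) conjC1 !mulr1 !mul1r !mulr0 !addr0 add0r in h.
rewrite rmorphN /= in h.
set c := M i j in h *.
have hX : 0 <= c^* * c by rewrite mulrC -normCK exprn_ge0.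
have e : - (c^* * c) * c = 0 -> True by [].
have hh : c^* * c + c^* * c <= 0.
  by rewrite -oppr_ge0; move: h; congr (0 <= _); ring.
have : c^* * c <= 0 by apply: le_trans hh; rewrite lerDl.
move=> hle; have : c^* * c == 0 by rewrite eq_le hle hX.
by rewrite mulf_eq0 conjC_eq0 orbb => /eqP.
Qed.

Lemma I2P (i : 'I_2) : i = 0 \/ i = 1.
Proof.
case: i => [[|[|k]]] h; [left|right|by []]; exact: val_inj.
Qed.

Lemma uuE n (u : 'cV[algC]_n) i j : (u *m adj_mx u) i j = u i 0 * (u j 0)^*.
Proof. by rewrite mxE big_ord1 adj_mxE. Qed.

Lemma tr2 (M : 'M[algC]_2) : \tr M = M 0 0 + M 1 1.
Proof. rewrite /mxtrace. rewrite !big_ord_recl big_ord0 addr0. by congr (_ + M _ _); apply: val_inj. Qed.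

Lemma chol2 (M : 'M[algC]_2) : psd M ->
  exists u w : 'cV[algC]_2, M = u *m adj_mx u + w *m adj_mx w.
Proof.
move=> hM.
have ha := psd_diag 0 hM; have hc := psd_diag 1 hM.
have ca := ge0_conj ha; have cc := ge0_conj hc.
have h10 := psd_herm 0 1 hM.
set a := (M 0 0 : algC); set b := (M 0 1 : algC); set c := (M 1 1 : algC).
have q1 : 0 <= a * (a * c - b * b^*).
  have := hM ((- b) *: (delta_mx 0 0 : 'cV_2) + a *: delta_mx 1 0).
  rewrite qf2 h10 rmorphN /= ca; congr (0 <= _); rewrite -/a -/b -/c; ring.
have q2 : 0 <= c * (a * c - b * b^*).
  have := hM (c *: (delta_mx 0 0 : 'cV_2) + (- b^*) *: delta_mx 1 0).
  rewrite qf2 h10 rmorphN /= cc conjCK; congr (0 <= _); rewrite -/a -/b -/c; ring.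
have [a0|anz] := eqVneq a 0.
  have [c0|cnz] := eqVneq c 0.
    exists 0, 0; rewrite !mul0mx addr0; apply: psd_tr0 => //.
    by rewrite tr2 -/a -/c a0 c0 addr0.
  have cpos : 0 < c by rewrite lt_def cnz hc.
  move: q2; rewrite pmulr_rge0 // a0 mul0r sub0r oppr_ge0 => hb.
  have hb0 : b * b^* = 0.
    by apply/eqP; rewrite eq_le hb /= -normCK exprn_ge0.
  have b0 : b = 0 by move/eqP: hb0; rewrite mulf_eq0 conjC_eq0 orbb => /eqP.
  exists (\matrix_(i < 2, j < 1) (if i == 0 then 0 else sqrtC c)), 0.
  rewrite mul0mx addr0; apply/matrixP => i j; rewrite uuE !mxE.
  case: (I2P i) => ->; case: (I2P j) => -> //=.
  - by rewrite mul0r; exact: a0.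
  - by rewrite mul0r; exact: b0.
  - have b0' : M 0 1 = 0 := b0.
    by rewrite h10 b0' conjC0 mulr0.
  - by rewrite ge0_conj ?sqrtC_ge0 // -expr2 sqrtCK.
have apos : 0 < a by rewrite lt_def anz ha.
have hdet : 0 <= a * c - b * b^* by move: q1; rewrite pmulr_rge0.
set s := sqrtC a.
have s2 : s * s = a by rewrite -expr2 sqrtCK.
have snz : s != 0 by rewrite sqrtC_eq0.
have cs : s^* = s by rewrite ge0_conj // sqrtC_ge0.
set t := sqrtC ((a * c - b * b^*) / a).
have ct : t^* = t by rewrite ge0_conj // sqrtC_ge0 divr_ge0.
have t2 : t * t = (a * c - b * b^*) / a by rewrite -expr2 sqrtCK.
exists (\matrix_(i < 2, j < 1) (if i == 0 then s else b^* / s)),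
       (\matrix_(i < 2, j < 1) (if i == 0 then 0 else t)).
apply/matrixP => i j; rewrite mxE !uuE !mxE.
case: (I2P i) => ->; case: (I2P j) => -> //=.
- by rewrite cs s2 mul0r addr0.
- by rewrite mul0r addr0 rmorphM /= conjCK fmorphV /= cs; change (b = s * (b / s)); field.
- by rewrite conjC0 mulr0 addr0 h10 cs; change (b^* = b^* / s * s); field.
- rewrite ct t2 rmorphM /= conjCK fmorphV /= cs; change (c = b^* / s * (b / s) + (a * c - b * b^*) / a).
  by rewrite -s2; field.
Qed.

Definition bar_mx (M : 'M[algC]_2) : 'M[algC]_2 := \tr M *: 1%:M - M.

Lemma bar_povmE n (A : 'I_n -> 'M[algC]_2) i : bar_povm A i = bar_mx (A i).
Proof. by []. Qed.

Lemma trD n (M N : 'M[algC]_n) : \tr (M + N) = \tr M + \tr N.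
Proof. by rewrite /mxtrace -big_split; apply: eq_bigr => i _; rewrite mxE. Qed.

Lemma trZ n c (M : 'M[algC]_n) : \tr (c *: M) = c * \tr M.
Proof. by rewrite /mxtrace mulr_sumr; apply: eq_bigr => i _; rewrite mxE. Qed.

Lemma trN n (M : 'M[algC]_n) : \tr (- M) = - \tr M.
Proof. by rewrite -scaleN1r trZ mulN1r. Qed.

Lemma tr_sum n (I : finType) (P : pred I) (F : I -> 'M[algC]_n) :
  \tr (\sum_(i | P i) F i) = \sum_(i | P i) \tr (F i).
Proof.
apply: (big_morph (@mxtrace _ n) (@trD n)).
by rewrite /mxtrace big1 // => i _; rewrite mxE.
Qed.

Lemma bar_mxD M N : bar_mx (M + N) = bar_mx M + bar_mx N.
Proof. by rewrite /bar_mx mxtraceD scalerDl opprD addrACA. Qed.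

Lemma bar_mxZ c M : bar_mx (c *: M) = c *: bar_mx M.
Proof. by rewrite /bar_mx mxtraceZ scalerBr scalerA. Qed.

Lemma bar_mx0 : bar_mx 0 = 0.
Proof. by rewrite /bar_mx mxtrace0 scale0r subr0. Qed.

Lemma bar_mx_sum (I : finType) (P : pred I) (F : I -> 'M[algC]_2) :
  bar_mx (\sum_(i | P i) F i) = \sum_(i | P i) bar_mx (F i).
Proof.
apply: (big_morph bar_mx bar_mxD bar_mx0).
Qed.

Lemma tr1_2 : \tr (1%:M : 'M[algC]_2) = 2.
Proof. by rewrite mxtrace1. Qed.

Lemma bar_mx1 : bar_mx 1%:M = 1%:M.
Proof.
rewrite /bar_mx tr1_2 -[X in _ - X](scale1r (1%:M : 'M[algC]_2)) -scalerBl.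
by rewrite (_ : 2 - 1 = 1 :> algC) ?scale1r //; ring.
Qed.

Lemma bar_mxK M : bar_mx (bar_mx M) = M.
Proof.
rewrite {1}/bar_mx trD trZ tr1_2 trN /bar_mx.
rewrite (_ : (\tr M * 2 - \tr M) = \tr M); last by ring.
by rewrite opprB addrC subrK.
Qed.

Lemma ord0_1 : (ord0 : 'I_1) = 0. Proof. exact: val_inj. Qed.

Lemma bar_uu (u : 'cV[algC]_2) :
  bar_mx (u *m adj_mx u) =
  let u' := \matrix_(i < 2, j < 1) (if i == 0 then - (u 1 0)^* else (u 0 0)^*) in
  u' *m adj_mx u'.
Proof.
rewrite /bar_mx tr2 !uuE /=; apply/matrixP=> i j.
rewrite !mxE !big_ord1 !adj_mxE !mxE.
have o1 : (ord0 : 'I_1) = 0 by apply: val_inj.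
case: (I2P i) => ->; case: (I2P j) => -> /=; rewrite ?mulr1n ?mulr0n ?rmorphN /= ?conjCK o1.
all: by rewrite ?mulr1 ?mulr0; ring.
Qed.

Lemma psd_bar M : psd M -> psd (bar_mx M).
Proof.
move=> /chol2 [u [w ->]]; rewrite bar_mxD !bar_uu /=.
by apply: psd_add; apply: psd_uu.
Qed.

Lemma herm_psd n (M : 'M[algC]_n) : psd M -> adj_mx M = M.
Proof. by move=> hM; apply/matrixP=> i j; rewrite adj_mxE (psd_herm j i hM). Qed.

Lemma adjXX0 m n (X : 'M[algC]_(m, n)) : adj_mx X *m X = 0 -> X = 0.
Proof.
move=> h; apply/matrixP=> i j; rewrite mxE.
have := congr1 (fun Y : 'M[algC]_n => Y j j) h; rewrite !mxE => /eqP.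
rewrite psumr_eq0 => [/allP hh|k _]; last first.
  by rewrite adj_mxE mulrC -normCK exprn_ge0.
have := hh i (mem_index_enum _); rewrite adj_mxE mulrC -normCK.
by rewrite expf_eq0 /= normr_eq0 => /eqP.
Qed.

Lemma proj_orth n m (B : 'I_m -> 'M[algC]_n) : projective_povm B ->
  forall i k, i != k -> B i *m B k = 0.
Proof.
move=> [[hpsd hsum] hid] i k ik.
have hB : forall l, adj_mx (B l) = B l by move=> l; apply: herm_psd.
pose X l := B k *m B l *m B k.
have hX : forall l, psd (X l) by move=> l; rewrite /X -{1}hB; apply: psd_conj.
have hs : \sum_(l | l != k) X l = 0.
  have e : B k = \sum_l X l.
    by rewrite /X -mulmx_suml -mulmx_sumr hsum mulmx1 hid.
  move: e; rewrite (bigD1 k) //= {1}/X hid hid => /eqP.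
  by move/eqP => e; apply: (addrI (B k)); rewrite addr0 -e.
have htr : \tr (X i) = 0.
  move/eqP: (congr1 (@mxtrace _ n) hs); rewrite tr_sum mxtrace0.
  rewrite psumr_eq0 => [/allP h|l _]; last exact: psd_tr_ge0.
  by apply/eqP; move: (h i (mem_index_enum _)); rewrite ik.
have X0 := psd_tr0 (hX i) htr.
apply: adjXX0; rewrite adj_mxM !hB -mulmxA (mulmxA (B i)) hid mulmxA.
exact: X0.
Qed.

Definition JM n (A : 'I_n -> 'M[algC]_2) : Prop :=
  exists G : 'I_n -> 'I_n -> 'M[algC]_2,
    (forall a b, psd (G a b)) /\ (forall a, \sum_b G a b = A a) /\
    (forall b, \sum_a G a b = bar_mx (A b)).

Section ProjC.
Variables (m : nat) (B : 'I_m -> 'M[algC]_2).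
Hypothesis hB : projective_povm B.

Definition Cmx i k := B i *m bar_mx (B k) *m B i.

Lemma Cmx_psd i k : psd (Cmx i k).
Proof.
case: hB => [[hpsd _] _].
rewrite /Cmx -{1}(herm_psd (hpsd i)); apply: psd_conj; exact: psd_bar.
Qed.

Lemma Cmx_sumk i : \sum_k Cmx i k = B i.
Proof.
case: hB => [[_ hsum] hid].
by rewrite /Cmx -mulmx_suml -mulmx_sumr -bar_mx_sum hsum bar_mx1 mulmx1 hid.
Qed.

Lemma Cmx_sumi k : \sum_i Cmx i k = bar_mx (B k).
Proof.
case: hB => [[_ hsum] hid].
have ho := proj_orth hB.
rewrite /Cmx {2}/bar_mx.
transitivity (\sum_i (\tr (B k) *: (B i *m B i) - B i *m B k *m B i)).
  by apply: eq_bigr => i _; rewrite mulmxBr mulmxBl -scalemxAr mulmx1 -scalemxAl.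
rewrite sumrB -scaler_sumr.
under eq_bigr do rewrite hid.
rewrite hsum (bigD1 k) //= big1 => [|i ik]; last by rewrite ho // mul0mx.
by rewrite addr0 hid hid.
Qed.

End ProjC.

Lemma ps_jm n (A : 'I_n -> 'M[algC]_2) : projective_simulable A -> JM A.
Proof.
move=> [K [p [m [B [q [[hp hp1] [hB [hq hA]]]]]]]].
exists (fun a b => \sum_(j < K) p j *: \sum_(i < m j) \sum_(k < m j)
         (q j i a * q j k b) *: Cmx (B j) i k).
split; [|split].
- move=> a b; apply: psd_sum => j _; apply: psd_scale; first exact: hp.
  apply: psd_sum => i _; apply: psd_sum => k _; apply: psd_scale.
    by apply: mulr_ge0; [case: (hq j i) | case: (hq j k)].
  exact: Cmx_psd.
- move=> a; rewrite hA exchange_big /=; apply: eq_bigr => j _.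
  rewrite -scaler_sumr; congr (_ *: _).
  rewrite exchange_big; apply: eq_bigr => i _ /=; rewrite exchange_big /=.
  rewrite -(Cmx_sumk (hB j) i) scaler_sumr; apply: eq_bigr => k _.
  rewrite -scaler_suml -mulr_sumr.
  by case: (hq j k) => _ ->; rewrite mulr1.
- move=> b; rewrite hA bar_mx_sum exchange_big /=; apply: eq_bigr => j _.
  rewrite bar_mxZ -scaler_sumr; congr (_ *: _).
  rewrite bar_mx_sum; under [RHS]eq_bigr do rewrite bar_mxZ.
  rewrite exchange_big /=.
  under eq_bigr do rewrite exchange_big /=.
  rewrite exchange_big /=; apply: eq_bigr => k _.
  rewrite -(Cmx_sumi (hB j) k) scaler_sumr; apply: eq_bigr => i _.
  rewrite -scaler_suml -mulr_suml.
  by case: (hq j i) => _ ->; rewrite mul1r.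
Qed.

Lemma sum_enumv (T : finType) (V : nmodType) (F : T -> V) :
  \sum_(j < #|T|) F (enum_val j) = \sum_t F t.
Proof. by rewrite (big_enum_val (A := T)). Qed.

Lemma ps_fin n (A : 'I_n -> 'M[algC]_2) (T : finType) (p : T -> algC)
  (B : T -> 'I_2 -> 'M[algC]_2) (q : T -> 'I_2 -> 'I_n -> algC) :
  prob_dist p -> (forall t, projective_povm (B t)) ->
  (forall t i', prob_dist (q t i')) ->
  (forall i, A i = \sum_t p t *: \sum_(i' < 2) q t i' i *: B t i') ->
  projective_simulable A.
Proof.
move=> [hp0 hp1] hB hq hA.
exists #|T|, (fun j => p (enum_val j)), (fun _ => 2%N), (fun j => B (enum_val j)),
  (fun j => q (enum_val j)).
split; [split|split; [|split]].
- by move=> j; apply: hp0.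
- by rewrite (sum_enumv (fun t => p t)).
- by move=> j; apply: hB.
- by move=> j i'; apply: hq.
- by move=> i; rewrite hA -(sum_enumv (fun t => p t *: \sum_(i' < 2) q t i' i *: B t i')).
Qed.

Definition nrm2 n (v : 'cV[algC]_n) : algC := (adj_mx v *m v) 0 0.
Definition projv (v : 'cV[algC]_2) : 'M[algC]_2 :=
  if nrm2 v == 0 then delta_mx 0 0 else (nrm2 v)^-1 *: (v *m adj_mx v).

Lemma nrm2_ge0 n (v : 'cV[algC]_n) : 0 <= nrm2 v.
Proof. by have := @psd1 n v; rewrite mulmx1. Qed.

Lemma tr_uu n (v : 'cV[algC]_n) : \tr (v *m adj_mx v) = nrm2 v.
Proof. by rewrite mxtrace_mulC /nrm2 /mxtrace big_ord1. Qed.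

Lemma uu_uu n (v : 'cV[algC]_n) :
  (v *m adj_mx v) *m (v *m adj_mx v) = nrm2 v *: (v *m adj_mx v).
Proof.
rewrite mulmxA -(mulmxA v) [adj_mx v *m v]mx11_scalar -/(nrm2 v).
by rewrite mul_mx_scalar -scalemxAl.
Qed.

Lemma delta00_uu : (delta_mx 0 0 : 'M[algC]_2) = (delta_mx 0 0 : 'cV_2) *m adj_mx (delta_mx 0 0 : 'cV_2).
Proof. by rewrite adj_delta mul_delta_mx. Qed.

Lemma nrm2_0 n (v : 'cV[algC]_n) : nrm2 v = 0 -> v = 0.
Proof.
move=> h; apply: adjXX0; apply/matrixP=> i j.
by rewrite [i]ord1 [j]ord1 -/(nrm2 v) h mxE.
Qed.

Lemma projv_scale v : nrm2 v *: projv v = v *m adj_mx v.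
Proof.
rewrite /projv; have [h|h] := eqVneq (nrm2 v) 0.
  by rewrite h scale0r (nrm2_0 h) mul0mx.
by rewrite scalerA mulfV // scale1r.
Qed.

Lemma projv_psd v : psd (projv v).
Proof.
rewrite /projv; case: ifP => _; first by rewrite delta00_uu; apply: psd_uu.
apply: psd_scale; last exact: psd_uu.
by rewrite invr_ge0 nrm2_ge0.
Qed.

Lemma projv_idem v : projv v *m projv v = projv v.
Proof.
rewrite /projv; case: ifP => h.
  by rewrite delta00_uu uu_uu -delta00_uu /nrm2 adj_delta mul_delta_mx mxE eqxx mulr1n scale1r.
rewrite -scalemxAl -scalemxAr uu_uu !scalerA; congr (_ *: _).
by field; apply/negbT.
Qed.

Lemma projv_tr v : \tr (projv v) = 1.
Proof.
rewrite /projv; case: ifP => h.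
  by rewrite delta00_uu tr_uu /nrm2 adj_delta mul_delta_mx mxE eqxx mulr1n.
by rewrite trZ tr_uu mulVf //; apply/negbT.
Qed.

Definition Bproj (v : 'cV[algC]_2) : 'I_2 -> 'M[algC]_2 :=
  fun i => if i == 0 then projv v else 1%:M - projv v.

Lemma Bproj_proj v : projective_povm (Bproj v).
Proof.
have e : 1%:M - projv v = bar_mx (projv v) by rewrite /bar_mx projv_tr scale1r.
split; [split|].
- move=> i; rewrite /Bproj; case: ifP => _; first exact: projv_psd.
  by rewrite e; apply: psd_bar; apply: projv_psd.
- by rewrite big_ord_recl big_ord1 /Bproj /= addrC subrK.
- move=> i; rewrite /Bproj; case: ifP => _; first exact: projv_idem.
  by rewrite mulmxBr mulmx1 mulmxBl mul1mx projv_idem subrr subr0.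
Qed.

Lemma sum_triple n (V : nmodType) (H : ('I_n * 'I_n) * 'I_2 -> V) :
  \sum_t H t = \sum_a \sum_b \sum_(k < 2) H ((a, b), k).
Proof.
rewrite [RHS](pair_bigA _ (fun a b => \sum_(k < 2) H ((a, b), k))) /=.
rewrite [RHS](eq_bigr (fun ab => \sum_(k < 2) H (ab, k))) => [|[a b] _ //].
rewrite (pair_bigA _ (fun ab k => H (ab, k))) /=.
by apply: eq_bigr => [[ab k]] _.
Qed.

Lemma sum_delta n (V : lmodType algC) (x : 'I_n) (F : 'I_n -> V) :
  \sum_a ((a == x)%:R : algC) *: F a = F x.
Proof.
rewrite (bigD1 x) //= big1 => [|a ax]; first by rewrite eqxx scale1r addr0.
by rewrite (negbTE ax) scale0r.
Qed.

Lemma sum_delta1 n (x : 'I_n) : \sum_i ((x == i)%:R : algC) = 1.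
Proof.
rewrite (bigD1 x) //= big1 => [|a ax]; first by rewrite eqxx addr0.
by rewrite eq_sym (negbTE ax).
Qed.

Lemma jm_ps n (A : 'I_n -> 'M[algC]_2) : povm A -> JM A -> projective_simulable A.
Proof.
move=> [_ hAsum] [G [hG [hGa hGb]]].
have : forall ab : 'I_n * 'I_n, exists uw : 'cV[algC]_2 * 'cV[algC]_2,
    G ab.1 ab.2 = uw.1 *m adj_mx uw.1 + uw.2 *m adj_mx uw.2.
  by move=> [a b]; have [u [w e]] := chol2 (hG a b); exists (u, w).
case/fin_all_exists => f hf.
pose vec (t : ('I_n * 'I_n) * 'I_2) := if t.2 == 0 then (f t.1).1 else (f t.1).2.
have hvec : forall a b, \sum_(k < 2) vec ((a, b), k) *m adj_mx (vec ((a, b), k)) = G a b.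
  by move=> a b; rewrite big_ord_recl big_ord1 /vec /= (hf (a, b)).
pose q (t : ('I_n * 'I_n) * 'I_2) (i' : 'I_2) (i : 'I_n) :=
  (((if i' == 0 then t.1.1 else t.1.2) == i)%:R : algC).
apply: (@ps_fin n A _ (fun t => nrm2 (vec t) / 2) (fun t => Bproj (vec t)) q).
- split; first by move=> t; rewrite divr_ge0 ?nrm2_ge0 ?ler0n.
  rewrite -mulr_suml sum_triple.
  transitivity (\tr (\sum_a A a) / 2); last by rewrite hAsum mxtrace1; field.
  congr (_ / 2); rewrite tr_sum; apply: eq_bigr => a _.
  rewrite -hGa tr_sum; apply: eq_bigr => b _.
  by rewrite -hvec tr_sum; apply: eq_bigr => k _; rewrite tr_uu.
- by move=> t; apply: Bproj_proj.
- by move=> t i'; split; [move=> i; rewrite /q ler0n | rewrite /q sum_delta1].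
- move=> i.
  have e1 : \sum_t ((t.1.1 == i)%:R : algC) *: (nrm2 (vec t) *: projv (vec t)) = A i.
    rewrite sum_triple -hGa (eq_bigr (fun a => ((a == i)%:R : algC) *: \sum_b G a b)).
      by rewrite sum_delta.
    move=> a _; rewrite scaler_sumr; apply: eq_bigr => b _.
    by rewrite -hvec scaler_sumr; apply: eq_bigr => k _; rewrite projv_scale.
  have e2 : \sum_t ((t.1.2 == i)%:R : algC) *: (nrm2 (vec t) *: (1%:M - projv (vec t))) = A i.
    rewrite -[RHS]bar_mxK -hGb bar_mx_sum sum_triple exchange_big /=.
    rewrite (eq_bigr (fun b => ((b == i)%:R : algC) *: \sum_a bar_mx (G a b))).
      by rewrite sum_delta.
    move=> b _; rewrite scaler_sumr; apply: eq_bigr => a _.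
    rewrite -hvec bar_mx_sum scaler_sumr; apply: eq_bigr => k _.
    by rewrite -projv_scale bar_mxZ /bar_mx projv_tr scale1r.
  rewrite (eq_bigr (fun t => 2^-1 *: (((t.1.1 == i)%:R : algC) *: (nrm2 (vec t) *: projv (vec t))
     + ((t.1.2 == i)%:R : algC) *: (nrm2 (vec t) *: (1%:M - projv (vec t)))))); last first.
    move=> t _; rewrite big_ord_recl big_ord1 /q /Bproj /=.
    by rewrite !scalerDr !scalerA; congr (_ *: _ + (_ *: _ + _ *: _)); ring.
  rewrite -scaler_sumr big_split /= e1 e2 -mulr2n -scaler_nat scalerA mulVf ?scale1r //.
  by rewrite pnatr_eq0.
Qed.

Lemma sum_mxvec m n (V : nmodType) (F : 'I_(m * n) -> V) :
  \sum_x F x = \sum_i \sum_j F (mxvec_index i j).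
Proof.
rewrite (reindex _ (curry_mxvec_bij m n)) /= pair_bigA.
by apply: eq_bigr => [[i j]] _.
Qed.

Lemma mv_eq m n (i j : 'I_m) (k l : 'I_n) :
  (mxvec_index i k == mxvec_index j l) = (i == j) && (k == l).
Proof.
have inj : injective (fun p : 'I_m * 'I_n => mxvec_index p.1 p.2).
  move=> [a b] [c e] /= h.
  by move: (congr1 (fun x => enum_val (cast_ord (esym (mxvec_cast m n)) x)) h);
     rewrite /mxvec_index !cast_ordK !enum_rankK.
by rewrite (inj_eq inj (i, k) (j, l)) xpair_eqE.
Qed.

Definition mv_inv m n (x : 'I_(m * n)) : 'I_m * 'I_n :=
  enum_val (cast_ord (esym (mxvec_cast m n)) x).

Lemma mv_invK m n (i : 'I_m) (j : 'I_n) : mv_inv (mxvec_index i j) = (i, j).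
Proof. by rewrite /mv_inv /mxvec_index cast_ordK enum_rankK. Qed.

Lemma tens_idE d (X : 'M[algC]_2) i k j l :
  tens_id d X (mxvec_index i k) (mxvec_index j l) = X i j * (k == l)%:R.
Proof.
rewrite /tens_id summxE (bigD1 i) //= [X in _ + X]big1 => [|i' i'i]; last first.
  rewrite summxE big1 // => j' _; rewrite summxE big1 // => k' _.
  by rewrite !mxE !mv_eq eq_sym (negbTE i'i) mulr0.
rewrite addr0 summxE (bigD1 j) //= [X in _ + X]big1 => [|j' j'j]; last first.
  rewrite summxE big1 // => k' _.
  by rewrite !mxE !mv_eq [j == _]eq_sym (negbTE j'j) !andbF mulr0.
rewrite addr0 summxE (bigD1 k) //= [X in _ + X]big1 => [|k' k'k]; last first.
  by rewrite !mxE !mv_eq eq_sym (negbTE k'k) andbF mulr0.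
rewrite addr0 !mxE !mv_eq !eqxx /=.
by case: (l == k) (k == l) (eq_sym k l) => [] [] //= _; rewrite ?mulr1 ?mulr0.
Qed.

Definition asmf d (rho : 'M[algC]_(2 * d)) (X : 'M[algC]_2) : 'M[algC]_d :=
  \matrix_(k, l) \sum_i \sum_j X i j * rho (mxvec_index j k) (mxvec_index i l).

Lemma ptraceE d (X : 'M[algC]_2) (rho : 'M[algC]_(2 * d)) :
  ptrace1 (tens_id d X *m rho) = asmf rho X.
Proof.
apply/matrixP=> k l; rewrite !mxE; apply: eq_bigr => i _.
rewrite mxE sum_mxvec; apply: eq_bigr => j _.
rewrite (bigD1 k) //= big1 => [|k' k'k]; last by rewrite tens_idE eq_sym (negbTE k'k) mulr0 mul0r.
by rewrite tens_idE eqxx mulr1 addr0.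
Qed.

Section Asm.
Variables (d : nat) (rho : 'M[algC]_(2 * d)).

Lemma asmfD X Y : asmf rho (X + Y) = asmf rho X + asmf rho Y.
Proof.
apply/matrixP=> k l; rewrite !mxE -big_split; apply: eq_bigr => i _.
by rewrite -big_split; apply: eq_bigr => j _; rewrite mxE mulrDl.
Qed.

Lemma asmfZ c X : asmf rho (c *: X) = c *: asmf rho X.
Proof.
apply/matrixP=> k l; rewrite !mxE mulr_sumr; apply: eq_bigr => i _.
by rewrite mulr_sumr; apply: eq_bigr => j _; rewrite mxE mulrA.
Qed.

Lemma asmf0 : asmf rho 0 = 0.
Proof. by apply/matrixP=> k l; rewrite !mxE big1 // => i _; rewrite big1 // => j _; rewrite mxE mul0r. Qed.

Lemma asmf_sum (I : finType) (P : pred I) (F : I -> 'M[algC]_2) :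
  asmf rho (\sum_(i | P i) F i) = \sum_(i | P i) asmf rho (F i).
Proof. exact: (big_morph (asmf rho) asmfD asmf0). Qed.

Lemma asmf_tr1 : \tr (asmf rho 1%:M) = \tr rho.
Proof.
rewrite /mxtrace [RHS]sum_mxvec exchange_big /=; apply: eq_bigr => k _.
rewrite mxE; apply: eq_bigr => i _.
rewrite (bigD1 i) //= big1 => [|j ji]; last by rewrite mxE eq_sym (negbTE ji) mul0r.
by rewrite mxE eqxx mul1r addr0.
Qed.

Definition Wmx (u : 'cV[algC]_2) : 'M[algC]_(2 * d, d) :=
  \matrix_(x, l) (u (mv_inv x).1 0 * ((mv_inv x).2 == l)%:R).

Lemma asmf_uu u : asmf rho (u *m adj_mx u) = adj_mx (Wmx u) *m rho *m Wmx u.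
Proof.
apply/matrixP=> k l.
transitivity (\sum_x \sum_y (Wmx u y k)^* * rho y x * Wmx u x l); last first.
  rewrite mxE; apply: eq_bigr => x _; rewrite [in RHS]mxE big_distrl /=.
  by apply: eq_bigr => y _; rewrite adj_mxE.
rewrite mxE sum_mxvec; apply: eq_bigr => i _.
rewrite (bigD1 l) //= [X in _ + X]big1 => [|l' l'l]; last first.
  by rewrite big1 // => y _; rewrite [Wmx u (mxvec_index _ _) _]mxE mv_invK /= (negbTE l'l) mulr0 mulr0.
rewrite addr0 sum_mxvec; apply: eq_bigr => j _.
rewrite (bigD1 k) //= [X in _ + X]big1 => [|k' k'k]; last first.
  by rewrite mxE mv_invK /= (negbTE k'k) mulr0 conjC0 !mul0r.
rewrite addr0 !mxE !mv_invK /= !eqxx !mulr1 big_ord1 adj_mxE.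
by rewrite mulrC mulrA mulrC mulrA.
Qed.

Lemma asmf_psd X : psd rho -> psd X -> psd (asmf rho X).
Proof.
move=> hr /chol2 [u [w ->]]; rewrite asmfD !asmf_uu.
by apply: psd_add; apply: psd_conj.
Qed.

End Asm.

Lemma has_LHS_fin d (X : Type) n (sigma : X -> 'I_n -> 'M[algC]_d) (T : finType)
  (pi : T -> algC) (sl : T -> 'M[algC]_d) (pcond : X -> T -> 'I_n -> algC) :
  prob_dist pi -> (forall t, state (sl t)) -> (forall x t, prob_dist (pcond x t)) ->
  (forall x a, sigma x a = \sum_t (pi t * pcond x t a) *: sl t) -> has_LHS sigma.
Proof.
move=> [hp0 hp1] hs hc he.
exists #|T|, (fun j => pi (enum_val j)), (fun j => sl (enum_val j)),
  (fun x j => pcond x (enum_val j)).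
split; [split|split; [|split]].
- by move=> j; apply: hp0.
- by rewrite (sum_enumv pi).
- by move=> j; apply: hs.
- by move=> x j; apply: hc.
- by move=> x a; rewrite he -(sum_enumv (fun t => (pi t * pcond x t a) *: sl t)).
Qed.

Lemma delta_uu n (i : 'I_n) :
  (delta_mx i i : 'M[algC]_n) = (delta_mx i 0 : 'cV_n) *m adj_mx (delta_mx i 0 : 'cV_n).
Proof. by rewrite adj_delta mul_delta_mx. Qed.

Lemma state_delta n (i : 'I_n) : state (delta_mx i i : 'M[algC]_n).
Proof.
split; first by rewrite delta_uu; apply: psd_uu.
rewrite /mxtrace (bigD1 i) //= big1 => [|j ji]; first by rewrite mxE !eqxx addr0.
by rewrite mxE (negbTE ji).
Qed.

Lemma jm_lhs n (A : 'I_n -> 'M[algC]_2) d (rho : 'M[algC]_(2 * d)) :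
  povm A -> JM A -> state rho -> has_LHS (assemblage (pair_A_barA A) rho).
Proof.
move=> [_ hAsum] [G [hG [hGa hGb]]] [hr htr].
have [k0 _] : exists k0 : 'I_d, True.
  case: d rho hr htr => [|d'] rho hr htr; last by exists ord0.
  by move: htr; rewrite /mxtrace big_ord0 => /eqP; rewrite eq_sym oner_eq0.
pose sig (t : 'I_n * 'I_n) := asmf rho (G t.1 t.2).
have hsig : forall t, psd (sig t) by move=> t; apply: asmf_psd.
pose pi t := \tr (sig t).
pose sl t := if pi t == 0 then delta_mx k0 k0 else (pi t)^-1 *: sig t.
have hpisl : forall t, pi t *: sl t = sig t.
  move=> t; rewrite /sl; case: ifP => /eqP h.
    by rewrite h scale0r; apply/esym/psd_tr0.
  by rewrite scalerA mulfV ?scale1r //; apply/eqP.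
pose pcond (x : bool) (t : 'I_n * 'I_n) (a : 'I_n) :=
  ((a == (if x then t.2 else t.1))%:R : algC).
apply: (has_LHS_fin (pi := pi) (sl := sl) (pcond := pcond)).
- split; first by move=> t; apply: psd_tr_ge0.
  rewrite -htr -asmf_tr1 -hAsum asmf_sum tr_sum.
  rewrite -(pair_bigA _ (fun a b => pi (a, b))) /=; apply: eq_bigr => a _.
  by rewrite -hGa asmf_sum tr_sum.
- move=> t; rewrite /sl; case: ifP => /eqP h; first exact: state_delta.
  split; first by apply: psd_scale; [rewrite invr_ge0 psd_tr_ge0 | ].
  by rewrite trZ mulVf //; apply/eqP.
- move=> x t; split; first by move=> a; rewrite /pcond ler0n.
  by rewrite /pcond (eq_bigr (fun a => (((if x then t.2 else t.1) == a)%:R : algC)))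
     ?sum_delta1 // => a _; rewrite eq_sym.
- move=> x a; rewrite /assemblage ptraceE.
  rewrite (eq_bigr (fun t => pcond x t a *: sig t)); last first.
    by move=> t _; rewrite mulrC -scalerA hpisl.
  rewrite -(pair_bigA _ (fun a' b => pcond x (a', b) a *: sig (a', b))) /=.
  case: x => /=.
  + rewrite [RHS]exchange_big /= [RHS](bigD1 a) //= [X in _ = _ + X]big1 => [|b ba]; last first.
      by rewrite big1 // => a' _; rewrite /pcond /= eq_sym (negbTE ba) scale0r.
    rewrite addr0 /bar_povm -[\tr _ *: _ - _]/(bar_mx (A a)) -hGb asmf_sum.
    by apply: eq_bigr => a' _; rewrite /pcond /= eqxx scale1r.
  + rewrite [RHS](bigD1 a) //= [X in _ = _ + X]big1 => [|b ba]; last first.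
      by rewrite big1 // => a' _; rewrite /pcond /= eq_sym (negbTE ba) scale0r.
    rewrite addr0 -hGa asmf_sum.
    by apply: eq_bigr => a' _; rewrite /pcond /= eqxx scale1r.
Qed.

Lemma trmxZ' n c (M : 'M[algC]_n) : (c *: M)^T = c *: M^T.
Proof. by apply/matrixP=> i j; rewrite !mxE. Qed.

Lemma trmx_sum' n (I : finType) (F : I -> 'M[algC]_n) : (\sum_i F i)^T = \sum_i (F i)^T.
Proof. by apply/matrixP=> i j; rewrite !(mxE, summxE); apply: eq_bigr => k _; rewrite mxE. Qed.

Lemma psd_trmx n (M : 'M[algC]_n) : psd M -> psd M^T.
Proof.
move=> hM v; have := hM (map_mx Num.conj v); rewrite !qfE.
rewrite exchange_big /=; congr (0 <= _); apply: eq_bigr => i _; apply: eq_bigr => j _.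
rewrite !mxE conjCK; ring.
Qed.

Definition psi0 : 'cV[algC]_(2 * 2) :=
  \matrix_(x, j) (((mv_inv x).1 == (mv_inv x).2 :> 'I_2)%:R).
Definition rho0 : 'M[algC]_(2 * 2) := 2^-1 *: (psi0 *m adj_mx psi0).

Lemma rho0E j k i l :
  rho0 (mxvec_index j k) (mxvec_index i l) = 2^-1 * ((j == k)%:R * (i == l)%:R).
Proof.
rewrite /rho0 mxE uuE !mxE !mv_invK /=.
by case: (i == l); rewrite ?conjC1 ?conjC0.
Qed.

Lemma rho0_state : state rho0.
Proof.
split; first by apply: psd_scale; [rewrite invr_ge0 ler0n | apply: psd_uu].
rewrite /rho0 trZ tr_uu /nrm2 mxE sum_mxvec.
rewrite (eq_bigr (fun i => 1)); first by rewrite sumr_const card_ord mulVf // pnatr_eq0.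
move=> i _; rewrite (bigD1 i) //= [X in _ + X]big1 => [|k ki]; last first.
  by rewrite adj_mxE !mxE mv_invK /= eq_sym (negbTE ki) conjC0 mul0r.
by rewrite adj_mxE !mxE mv_invK /= eqxx conjC1 mul1r addr0.
Qed.

Lemma asmf_rho0 E : asmf rho0 E = 2^-1 *: E^T.
Proof.
apply/matrixP=> k l; rewrite !mxE (bigD1 l) //= [X in _ + X]big1 => [|i il]; last first.
  by rewrite big1 // => j _; rewrite rho0E (negbTE il) !mulr0.
rewrite addr0 (bigD1 k) //= [X in _ + X]big1 => [|j jk]; last by rewrite rho0E (negbTE jk) mul0r mulr0 mulr0.
by rewrite rho0E !eqxx !mulr1 !addr0 mulrC.
Qed.

Lemma lhs_jm n (A : 'I_n -> 'M[algC]_2) :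
  has_LHS (assemblage (pair_A_barA A) rho0) -> JM A.
Proof.
move=> [L [pi [sl [pc [[hp0 hp1] [hsl [hpc he]]]]]]].
have key : forall x a, pair_A_barA A x a = \sum_l (2 * (pi l * pc x l a)) *: (sl l)^T.
  move=> x a; have := he x a; rewrite /assemblage ptraceE asmf_rho0 => e.
  have -> : pair_A_barA A x a = (2 *: (2^-1 *: (pair_A_barA A x a)^T))^T.
    by rewrite scalerA mulfV ?pnatr_eq0 // scale1r trmxK.
  rewrite e trmxZ' trmx_sum' scaler_sumr; apply: eq_bigr => l _.
  by rewrite trmxZ' scalerA.
exists (fun a b => \sum_l (2 * (pi l * pc false l a * pc true l b)) *: (sl l)^T).
split; [|split].
- move=> a b; apply: psd_sum => l _; apply: psd_scale; last first.
    by apply: psd_trmx; case: (hsl l).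
  apply: mulr_ge0; first by rewrite ler0n.
  apply: mulr_ge0; [apply: mulr_ge0|]; [exact: hp0| case: (hpc false l) => h _; exact: h |
    case: (hpc true l) => h _; exact: h].
- move=> a; rewrite -[A a]/(pair_A_barA A false a) (key false a) exchange_big /=; apply: eq_bigr => l _.
  rewrite -scaler_suml; congr (_ *: _); rewrite -mulr_sumr -mulr_sumr.
  by case: (hpc true l) => _ ->; rewrite mulr1.
- move=> b; rewrite -[bar_mx (A b)]/(pair_A_barA A true b) (key true b) exchange_big /=; apply: eq_bigr => l _.
  rewrite -scaler_suml; congr (_ *: _); rewrite -mulr_sumr; congr (_ * _).
  rewrite -mulr_suml -mulr_sumr.
  by case: (hpc false l) => _ ->; rewrite mulr1.
Qed.

Theorem corollary2 (n : nat) (A : 'I_n -> 'M[algC]_2) :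
  povm A ->
  (projective_simulable A <->
   forall (d : nat) (rho : 'M[algC]_(2 * d)),
     state rho -> ~ demonstrates_steering (pair_A_barA A) rho).
Proof.
move=> hA; split.
- move=> hps d rho hr hn; apply: hn; apply: jm_lhs => //; exact: ps_jm.
- move=> h; apply: jm_ps => //; apply: lhs_jm; apply: NNPP.
  exact: (h 2%N rho0 rho0_state).
Qed.
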